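(* Let $B:=M_n(\mathbb{C})$, let $R$ be a tolerance relation on $\{1,\ldots,n\}$ and let $A=A(R)\subset M_n(\mathbb{C})$ be the subspace of matrices $a$ with $a_{ij}=0$ whenever $(i,j)\notin R$. Let $F:\mathcal{S}(B)\to\mathcal{S}(A)$ be the map restricting states of $B$ to $A$. The following are equivalent: (i) $F$ is injective; (ii) the restriction of $F$ to pure states of $B$ is injective; (iii) $A=B=M_n(\mathbb{C})$.
   Context: A tolerance relation on a set $X$ is a reflexive and symmetric relation $R\subset X\times X$. $A(R)$ is an operator system in $M_n(\mathbb{C})$ (it contains the identity and is closed under adjoints). A state of $A$ is a linear functional $\varphi:A\to\mathbb{C}$ with $\varphi(a)\ge0$ for every positive semidefinite $a\in A$ and $\varphi(1)=1$; $\mathcal{S}(\cdot)$ denotes the set of states; pure states are extremal states. *)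

(* Defs.v *)
From HB Require Import structures.
From mathcomp Require Import all_boot all_order all_algebra.
From mathcomp Require Import complex reals.
Set Implicit Arguments. Unset Strict Implicit. Unset Printing Implicit Defensive.
Import Order.TTheory GRing.Theory Num.Theory.
Local Open Scope ring_scope.

Section Defs.
Variables (R : realType) (n : nat).
Local Notation C := R[i].

Definition adjmx (a : 'M[C]_n) : 'M[C]_n := (map_mx (@Num.conj C) a)^T.

Definition psd (a : 'M[C]_n) : Prop :=
  adjmx a = a /\
  forall v : 'cV[C]_n, 0 <= ((map_mx (@Num.conj C) v)^T *m a *m v) 0 0.

Definition inA (T : rel 'I_n) (a : 'M[C]_n) : Prop :=
  forall i j, ~~ T i j -> a i j = 0.

Definition tolerance (T : rel 'I_n) : Prop := reflexive T /\ symmetric T.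

Definition is_state (phi : 'M[C]_n -> C) : Prop :=
  (forall (c : C) (a b : 'M[C]_n), phi (c *: a + b) = c * phi a + phi b) /\
  (forall a, psd a -> 0 <= phi a) /\
  phi 1%:M = 1.

Definition is_pure_state (phi : 'M[C]_n -> C) : Prop :=
  is_state phi /\
  forall (phi1 phi2 : 'M[C]_n -> C) (t : C),
    is_state phi1 -> is_state phi2 -> 0 < t -> t < 1 ->
    (forall a, phi a = t * phi1 a + (1 - t) * phi2 a) ->
    (forall a, phi1 a = phi a) /\ (forall a, phi2 a = phi a).

(* F(phi) = F(psi), where F restricts states of B to A(T) *)
Definition same_restriction (T : rel 'I_n) (phi psi : 'M[C]_n -> C) : Prop :=
  forall a, inA T a -> phi a = psi a.

End Defs.

(* Main.v *)
Require Import Defs.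
From HB Require Import structures.
From mathcomp Require Import all_boot all_order all_algebra.
From mathcomp Require Import complex reals ring lra.
Set Implicit Arguments. Unset Strict Implicit. Unset Printing Implicit Defensive.
Import Order.TTheory GRing.Theory Num.Theory.
Local Open Scope ring_scope.

Lemma lin_coef0 (R : realFieldType) (a d : R) : (forall s : R, 0 <= s * a + d) -> a = 0.
Proof.
move=> H; apply/eqP; apply/negPn/negP => ha.
have := H (- (d + 1) / a). rewrite mulrAC -mulrA divff // mulr1.
lra.
Qed.

Lemma degen (R : realType) (q r d : R[i]) :
  (forall l : R[i], 0 <= l * q + Num.conj l * r + d) -> q = 0 /\ r = 0.
Proof.
move: q r d => [q1 q2] [r1 r2] [d1 d2] H.
have H1 s := H (s +i* 0)%C.
have H2 s := H (0 +i* s)%C.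
simpl in H1, H2.
have h1 s : s * (q2 + r2) + d2 = 0 /\ 0 <= s * (q1 + r1) + d1.
  move: (H1 s); rewrite lecE /= => /andP[/eqP e1 e2]; split.
    by rewrite -e1; ring.
  by move: e2; congr (_ <= _); ring.
have h2 s : s * (q1 - r1) + d2 = 0 /\ 0 <= s * (r2 - q2) + d1.
  move: (H2 s); rewrite lecE /= => /andP[/eqP e1 e2]; split.
    by rewrite -e1; ring.
  by move: e2; congr (_ <= _); ring.
have d20 : d2 = 0 by have [] := h1 0; rewrite mul0r add0r.
have a1 : q2 + r2 = 0 by have [] := h1 1; rewrite d20 addr0 mul1r.
have a2 : q1 - r1 = 0 by have [] := h2 1; rewrite d20 addr0 mul1r.
have a3 : q1 + r1 = 0 by apply: (@lin_coef0 _ _ d1) => s; case: (h1 s).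
have a4 : r2 - q2 = 0 by apply: (@lin_coef0 _ _ d1) => s; case: (h2 s).
have -> : q1 = 0 by lra.
have -> : q2 = 0 by lra.
have -> : r1 = 0 by lra.
have -> : r2 = 0 by lra.
by [].
Qed.

Section Core.
Variables (R : realType) (n : nat).
Local Notation C := R[i].
Local Notation conj := (@Num.conj C).

Definition cadj (x : 'cV[C]_n) : 'rV[C]_n := (map_mx conj x)^T.
Definition rk1 (x y : 'cV[C]_n) : 'M[C]_n := x *m cadj y.
Definition dot (x y : 'cV[C]_n) : C := (cadj x *m y) 0 0.

Lemma rk1E x y k l : rk1 x y k l = x k 0 * conj (y l 0).
Proof. by rewrite /rk1 !mxE big_ord1 !mxE. Qed.

Lemma dotE x y : dot x y = \sum_k conj (x k 0) * y k 0.
Proof. by rewrite /dot !mxE; apply: eq_bigr => k _; rewrite !mxE. Qed.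

Lemma dotC x y : dot y x = conj (dot x y).
Proof.
rewrite !dotE rmorph_sum; apply: eq_bigr => k _.
by rewrite rmorphM /= conjCK mulrC.
Qed.

Lemma dotDr x a y z : dot x (a *: y + z) = a * dot x y + dot x z.
Proof.
rewrite !dotE mulr_sumr -big_split; apply: eq_bigr => k _ /=.
by rewrite !mxE; ring.
Qed.

Lemma dotDl x a y z : dot (a *: y + z) x = conj a * dot y x + dot z x.
Proof. by rewrite dotC dotDr rmorphD rmorphM /= -!dotC. Qed.

Lemma rk1Dl a x y z : rk1 (a *: x + y) z = a *: rk1 x z + rk1 y z.
Proof. by apply/matrixP => k l; rewrite !(rk1E, mxE); ring. Qed.

Lemma rk1Dr a x y z : rk1 z (a *: x + y) = conj a *: rk1 z x + rk1 z y.
Proof.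
apply/matrixP => k l; rewrite !(rk1E, mxE) rmorphD rmorphM /=; ring.
Qed.

Lemma psd_rk1 x : psd (rk1 x x).
Proof.
split.
  by apply/matrixP => k l; rewrite /adjmx [LHS]mxE [LHS]mxE !rk1E rmorphM /= conjCK mulrC.
move=> v.
have -> : ((map_mx conj v)^T *m rk1 x x *m v) 0 0 = dot v x * conj (dot v x).
  rewrite /rk1 mulmxA -mulmxA mxE big_ord1.
  by rewrite -dotC.
exact: mul_conjC_ge0.
Qed.

Definition islin (f : 'M[C]_n -> C) :=
  forall (c : C) (a b : 'M[C]_n), f (c *: a + b) = c * f a + f b.

Lemma lin0 f : islin f -> f 0 = 0.
Proof.
move=> lf; have := lf 1 0 0; rewrite scaler0 addr0 mul1r => h.
by apply: (addrI (f 0)); rewrite addr0 -h.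
Qed.

Lemma linZ f c a : islin f -> f (c *: a) = c * f a.
Proof. by move=> lf; rewrite -[c *: a]addr0 lf lin0 // addr0. Qed.

Lemma linD f a b : islin f -> f (a + b) = f a + f b.
Proof. by move=> lf; have := lf 1 a b; rewrite scale1r mul1r. Qed.

Lemma lin_sum f (I : Type) (r : seq I) (P : pred I) (F : I -> 'M[C]_n) :
  islin f -> f (\sum_(i <- r | P i) F i) = \sum_(i <- r | P i) f (F i).
Proof.
move=> lf; elim: r => [|x r IH]; first by rewrite !big_nil lin0.
rewrite !big_cons; case: (P x) => //; by rewrite linD // IH.
Qed.

Lemma lin_expand f a : islin f ->
  f a = \sum_(k < n) \sum_(l < n) a k l * f (delta_mx k l).
Proof.
move=> lf; rewrite {1}(matrix_sum_delta a) lin_sum //; apply: eq_bigr => k _.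
by rewrite lin_sum //; apply: eq_bigr => l _; rewrite linZ.
Qed.

Definition ev (k : 'I_n) : 'cV[C]_n := delta_mx k 0.

Lemma rk1_ev k l : rk1 (ev k) (ev l) = delta_mx k l.
Proof.
apply/matrixP => a b; rewrite rk1E !mxE.
case: (a == k); case: (b == l); rewrite /= ?conjC1 ?conjC0 ?mulr1 ?mulr0 ?mul0r //.
Qed.


Definition vstate (v : 'cV[C]_n) (a : 'M[C]_n) : C := (cadj v *m a *m v) 0 0 / dot v v.

Lemma vstateE v a : vstate v a = dot v (a *m v) / dot v v.
Proof. by rewrite /vstate /dot mulmxA. Qed.

Lemma vstate_rk1 v x y : vstate v (rk1 x y) = dot v x * dot y v / dot v v.
Proof. by rewrite /vstate /rk1 mulmxA -mulmxA mxE big_ord1. Qed.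

Lemma vstate_lin v : islin (vstate v).
Proof.
move=> c a b; rewrite /vstate mulmxDr mulmxDl -scalemxAr -scalemxAl !mxE.
by rewrite mulrDl mulrA.
Qed.

Lemma dot_real v : conj (dot v v) = dot v v.
Proof. by rewrite -dotC. Qed.

Lemma core v phi t : 0 < dot v v -> islin phi -> phi 1%:M = 1 ->
  (forall x, 0 <= phi (rk1 x x)) -> 0 < t ->
  (forall b, psd b -> t * phi b <= vstate v b) -> forall a, phi a = vstate v a.
Proof.
move=> c0 lf f1 pos t0 H.
have cn0 : dot v v != 0 by rewrite gt_eqF.
have step2 x : dot v x = 0 -> phi (rk1 x x) = 0.
  move=> hx; have h1 := H _ (psd_rk1 x).
  rewrite vstate_rk1 hx !mul0r in h1.
  have : t * phi (rk1 x x) = 0.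
    by apply: le_anti; rewrite h1 mulr_ge0 // ltW.
  by move/eqP; rewrite mulf_eq0 gt_eqF //= => /eqP.
have step3 x y : dot v x = 0 -> phi (rk1 x y) = 0 /\ phi (rk1 y x) = 0.
  move=> hx; apply: (@degen _ _ _ (phi (rk1 y y))) => l.
  have := pos (l *: x + y).
  rewrite rk1Dl !rk1Dr !lf (step2 x hx).
  by congr (_ <= _); ring.
have step4 x y : phi (rk1 x y) = vstate v (rk1 x y) * (phi (rk1 v v) / dot v v).
  pose a := dot v x / dot v v; pose b := dot v y / dot v v.
  have ex : x = a *: v + ((- a) *: v + x).
    by rewrite addrA -scalerDl addrN scale0r add0r.
  have ey : y = b *: v + ((- b) *: v + y).
    by rewrite addrA -scalerDl addrN scale0r add0r.
  have hx : dot v ((- a) *: v + x) = 0.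
    by rewrite dotDr /a mulNr mulrVK ?addNr //; rewrite unitfE.
  have hy : dot v ((- b) *: v + y) = 0.
    by rewrite dotDr /b mulNr mulrVK ?addNr //; rewrite unitfE.
  have e1 : phi (rk1 x y) = a * phi (rk1 v y).
    by rewrite {1}ex rk1Dl linD // linZ // (step3 _ _ hx).1 addr0.
  have e2 : phi (rk1 v y) = conj b * phi (rk1 v v).
    by rewrite {1}ey rk1Dr linD // linZ // (step3 _ _ hy).2 addr0.
  rewrite e1 e2 vstate_rk1 /a /b fmorph_div /= -!dotC.
  by field.
have step5 a : phi a = vstate v a * (phi (rk1 v v) / dot v v).
  rewrite (lin_expand a lf) (lin_expand a (vstate_lin v)) mulr_suml.
  apply: eq_bigr => k _; rewrite mulr_suml; apply: eq_bigr => l _.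
  by rewrite -rk1_ev step4 mulrA.
have k1 : phi (rk1 v v) / dot v v = 1.
  have := step5 1%:M; rewrite f1 /vstate mulmx1 divff // mul1r.
  by move->.
by move=> a; rewrite step5 k1 mulr1.
Qed.

Lemma vstate_state v : 0 < dot v v -> is_state (vstate v).
Proof.
move=> c0; split; first exact: vstate_lin.
split.
  move=> a [_ pa]; rewrite /vstate; apply: divr_ge0; [exact: pa | exact: ltW].
by rewrite /vstate mulmx1 divff // gt_eqF.
Qed.

Lemma vstate_pure v : 0 < dot v v -> is_pure_state (vstate v).
Proof.
move=> c0; split; first exact: vstate_state.
move=> p1 p2 t [l1 [s1 o1]] [l2 [s2 o2]] t0 t1 H; split => a.
  apply: (core c0 l1 o1 _ t0) => [x|b pb]; first exact: s1 (psd_rk1 x).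
  rewrite H lerDl; apply: mulr_ge0; [by rewrite subr_ge0 ltW | exact: s2].
apply: (@core v p2 (1 - t) c0 l2 o2 _ _) => [x||b pb]; first exact: s2 (psd_rk1 x).
  by rewrite subr_gt0.
rewrite H lerDr; apply: mulr_ge0; [exact: ltW | exact: s1].
Qed.

Lemma dot_ev k y : dot (ev k) y = y k 0.
Proof.
rewrite dotE (bigD1 k) //= big1 ?addr0; last first.
  by move=> l /negbTE lk; rewrite !mxE lk /= conjC0 mul0r.
by rewrite !mxE !eqxx /= conjC1 mul1r.
Qed.

Lemma mx_ev (a : 'M[C]_n) k l : (a *m ev l) k 0 = a k l.
Proof. by rewrite /ev -(@colE _ n n l a) mxE. Qed.

Lemma vstate_ws (i j : 'I_n) (s : C) (a : 'M[C]_n) : i != j ->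
  vstate (s *: ev j + ev i) a =
  (conj s * (s * a j j + a j i) + (s * a i j + a i i)) / (conj s * s + 1).
Proof.
move=> ij; rewrite vstateE mulmxDr -scalemxAr !dotDl !dotDr !dot_ev !mx_ev.
rewrite /ev !mxE !eqxx (negbTE ij) eq_sym (negbTE ij) /=.
by rewrite !mulr0 !addr0 !mulr1 add0r.
Qed.

End Core.

From Stdlib Require Import FunctionalExtensionality.

Theorem proposition4p3 (R : realType) (n : nat) (T : rel 'I_n) :
  tolerance T ->
  [<->
    (* (i) F injective on states *)
    (forall phi psi : 'M[R[i]]_n -> R[i],
        is_state phi -> is_state psi -> same_restriction T phi psi ->
        phi = psi);
    (* (ii) F injective on pure states *)
    (forall phi psi : 'M[R[i]]_n -> R[i],
        is_pure_state phi -> is_pure_state psi -> same_restriction T phi psi ->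
        phi = psi);
    (* (iii) A = B *)
    (forall a : 'M[R[i]]_n, inA T a)].
Proof.
move=> [Trefl Tsym]; tfae.
- by move=> H phi psi [sp _] [sq _]; exact: H.
- move=> H a i j nT; exfalso.
  have ij : i != j by apply: contraNneq nT => ->; rewrite Trefl.
  have nT' : ~~ T j i by rewrite Tsym.
  have two : (1 + 1 : R[i]) != 0.
    by rewrite -[1 + 1]/(2%:R) pnatr_eq0.
  have c0 (s : R[i]) : Num.conj s * s = 1 ->
      0 < dot (s *: ev R j + ev R i) (s *: ev R j + ev R i).
    move=> hs; rewrite !dotDl !dotDr !dot_ev /ev !mxE !eqxx (negbTE ij).
    rewrite eq_sym (negbTE ij) /= !mulr0 !addr0 !mulr1 add0r hs.
    by rewrite -[1 + 1]/(2%:R) ltr0n.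
  have hp : Num.conj (1 : R[i]) * 1 = 1 by rewrite conjC1 mulr1.
  have hm : Num.conj (-1 : R[i]) * -1 = 1 by rewrite conjCN1 mulrNN mulr1.
  have hsr : same_restriction T (vstate (1 *: ev R j + ev R i))
                               (vstate ((-1) *: ev R j + ev R i)).
    move=> b hb; rewrite !vstate_ws // (hb _ _ nT) (hb _ _ nT') hp hm conjC1 conjCN1.
    by rewrite !mulr0 !addr0 !mul1r mulN1r mulN1r opprK.
  have := H _ _ (vstate_pure (c0 _ hp)) (vstate_pure (c0 _ hm)) hsr.
  move/(congr1 (fun f => f (delta_mx i j))).
  rewrite !vstate_ws // hp hm conjC1 conjCN1 !mxE !eqxx (negbTE ij) eq_sym (negbTE ij) /=.
  rewrite !mulr0 !addr0 !mulr1 mulN1r mul1r.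
  move/(congr1 (fun z => z * (1 + 1))); rewrite !divfK //.
  move/eqP; rewrite add0r oppr0 sub0r -subr_eq0 opprK => h.
  by move: two; rewrite (eqP h) eqxx.
- move=> H phi psi _ _ hs; apply: functional_extensionality => a.
  exact: hs a (H a).
Qed.
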